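(* For every integer $t \ge 4$, there exists a doubly saturated $R(4,t)$-good graph on $6t-11$ vertices.
   Context: All graphs are finite and simple. For integers $s,t$, a graph $G$ is \emph{$R(s,t)$-good} if $G$ contains no clique of size $s$ and no independent set of size $t$. A graph $G$ is \emph{doubly saturated $R(s,t)$-good} if (i) $G$ is $R(s,t)$-good; (ii) for every pair of non-adjacent distinct vertices $u,v$, the graph $G + uv$ is not $R(s,t)$-good; (iii) for every edge $uv$ of $G$, the graph $G - uv$ is not $R(s,t)$-good; and (iv) $G$ is neither a complete graph nor an edgeless graph (equivalently, neither $G$ nor its complement $\overline{G}$ is complete). *)

(* Defs.v *)
From mathcomp Require Import all_boot.
Set Implicit Arguments. Unset Strict Implicit. Unset Printing Implicit Defensive.

Definition simple_graph (T : finType) (e : rel T) : Prop :=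
  irreflexive e /\ symmetric e.

Definition is_clique (T : finType) (e : rel T) (S : {set T}) : Prop :=
  forall x y, x \in S -> y \in S -> x != y -> e x y.

Definition is_indep (T : finType) (e : rel T) (S : {set T}) : Prop :=
  forall x y, x \in S -> y \in S -> x != y -> ~~ e x y.

Definition Rgood (T : finType) (s t : nat) (e : rel T) : Prop :=
  (forall S : {set T}, #|S| = s -> ~ is_clique e S) /\
  (forall S : {set T}, #|S| = t -> ~ is_indep e S).

Definition add_edge (T : finType) (e : rel T) (u v : T) : rel T :=
  fun x y => e x y || ((x == u) && (y == v)) || ((x == v) && (y == u)).
Definition del_edge (T : finType) (e : rel T) (u v : T) : rel T :=
  fun x y => e x y && ~~ (((x == u) && (y == v)) || ((x == v) && (y == u))).

Definition doubly_saturated (T : finType) (s t : nat) (e : rel T) : Prop :=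
  [/\ Rgood s t e,
      (forall u v, u != v -> ~~ e u v -> ~ Rgood s t (add_edge e u v)),
      (forall u v, e u v -> ~ Rgood s t (del_edge e u v)),
      (exists u v, u != v /\ ~~ e u v) &
      (* complement of G is not complete, i.e. G has an edge *)
      (exists u v, e u v)].

(* Main.v *)
Require Import Defs.
From mathcomp Require Import all_boot.
From mathcomp Require Import zify.
Set Implicit Arguments. Unset Strict Implicit. Unset Printing Implicit Defensive.


Definition okb m D := (D == m) || (D == 5*m+1) || ((2*m+1 <= D) && (D <= 4*m)).
Definition adjb m (x y : nat) := ((x < y) && okb m (y-x)) || ((y < x) && okb m (x-y)).
Definition G m : rel 'I_(6*m+1) := fun x y => adjb m x y.

Lemma Npos m : 0 < 6*m+1. Proof. by rewrite addn1. Qed.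
Definition sh m (b : 'I_(6*m+1)) (k : nat) : 'I_(6*m+1) := Ordinal (ltn_pmod (b + k) (Npos m)).

Lemma sh_val m (b : 'I_(6*m+1)) k : k < 6*m+1 ->
  (nat_of_ord (sh b k) = b + k /\ b + k < 6*m+1) \/ (nat_of_ord (sh b k) + (6*m+1) = b + k /\ 6*m+1 <= b+k).
Proof.
move=> hk /=. have hb := ltn_ord b.
case: (ltnP (b+k) (6*m+1)) => h.
  by left; rewrite modn_small.
right; have E : b + k = (b+k-(6*m+1)) + (6*m+1) by lia.
rewrite E modnDr modn_small; [by [] | lia].
Qed.

Lemma sh0 m (b : 'I_(6*m+1)) : sh b 0 = b.
Proof. apply: val_inj => /=; rewrite addn0 modn_small //. Qed.

Lemma sh_inj m (b : 'I_(6*m+1)) i j : i < 6*m+1 -> j < 6*m+1 -> sh b i = sh b j -> i = j.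
Proof.
move=> hi hj /(congr1 (@nat_of_ord _)) E.
have := sh_val b hi; have := sh_val b hj; lia.
Qed.

Lemma sh_neq m (b : 'I_(6*m+1)) i j : i < 6*m+1 -> j < 6*m+1 -> i != j -> (sh b i == sh b j) = false.
Proof. move=> hi hj hij; apply/negP => /eqP /(sh_inj hi hj) E; by rewrite E eqxx in hij. Qed.

Lemma adj_sh_lt m (b : 'I_(6*m+1)) i j : i < j -> j < 6*m+1 -> G (sh b i) (sh b j) = okb m (j - i).
Proof.
move=> hij hj. have hi : i < 6*m+1 by lia.
have := sh_val b hi; have := sh_val b hj; have := ltn_ord b.
rewrite /G /adjb /okb.
move: (nat_of_ord (sh b i)) (nat_of_ord (sh b j)) => x y H1 H2 H3.
apply/idP/idP => H; lia.
Qed.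

Lemma adj_sh_gt m (b : 'I_(6*m+1)) i j : j < i -> i < 6*m+1 -> G (sh b i) (sh b j) = okb m (i - j).
Proof.
move=> hij hi. rewrite -(adj_sh_lt b hij hi). by rewrite /G /adjb orbC.
Qed.

Definition off m (b x : 'I_(6*m+1)) : nat := if b <= x then x - b else x + (6*m+1) - b.

Lemma off_lt m (b x : 'I_(6*m+1)) : off b x < 6*m+1.
Proof. have := ltn_ord b; have := ltn_ord x; rewrite /off; case: ifP; lia. Qed.

Lemma off_spec m (b x : 'I_(6*m+1)) : (b <= x /\ off b x = x - b) \/ (x < b /\ off b x = x + (6*m+1) - b).
Proof. rewrite /off; case: ifP; lia. Qed.

Lemma sh_off m (b x : 'I_(6*m+1)) : sh b (off b x) = x.
Proof.
apply: ord_inj. have := sh_val b (off_lt b x). have := off_spec b x.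
have := ltn_ord b; have := ltn_ord x. lia.
Qed.
Definition qf m (lo R x : nat) := if x <= lo + 2*m then R - x else R + (6*m+1) - x.
Definition cq m z := if z < m then z else if z < 2*m then z - m else m.
Lemma qf_spec m lo R x : (x <= lo + 2*m /\ qf m lo R x = R - x) \/ (lo + 2*m < x /\ qf m lo R x = R + (6*m+1) - x).
Proof. rewrite /qf; case: ifP; lia. Qed.
Lemma cq_spec m z : (z < m /\ cq m z = z) \/ (m <= z < 2*m /\ cq m z = z - m) \/ (2*m <= z /\ cq m z = m).
Proof. rewrite /cq; case: ifP => h1; [|case: ifP => h2]; lia. Qed.
Lemma cq_le m z : cq m z < m.+1.
Proof. have := cq_spec m z; lia. Qed.
Lemma nadj m x y : y < x -> ~~ adjb m x y -> ~ (x - y = m \/ x - y = 5*m+1 \/ (2*m+1 <= x - y <= 4*m)).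
Proof. rewrite /adjb /okb => h; rewrite h ltnNge (ltnW h) /= => H. lia. Qed.
Lemma step1 m lo R x : 2<=m -> lo <= x -> x < 6*m+1 -> lo <= R -> R <= lo + 2*m -> R < 6*m+1 ->
 (x = lo \/ ~~adjb m x lo) -> (x <= lo+2*m -> x <= R) -> (x = R \/ ~~adjb m x R) ->
 qf m lo R x <= 2*m /\ ((x <= R /\ qf m lo R x = R - x) \/ (R < x /\ qf m lo R x + x = R + (6*m+1))).
Proof.
move=> h0 h1 h2 h3 h4 h5 H6 h7 H8.
rewrite /qf; case: ifP => hx.
  have := h7 hx; lia.
have h9 : lo < x by lia.
case: H6 => [|/(nadj h9) H6]; first lia.
have h10 : R < x by lia.
case: H8 => [|/(nadj h10) H8]; first lia.
lia.
Qed.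
Lemma step2 m R x y qx qy : 2<=m -> x < 6*m+1 -> y < 6*m+1 -> R < 6*m+1 -> qx <= 2*m -> qy <= 2*m ->
 ((x <= R /\ qx = R - x) \/ (R < x /\ qx + x = R + (6*m+1))) ->
 ((y <= R /\ qy = R - y) \/ (R < y /\ qy + y = R + (6*m+1))) ->
 ~~ adjb m x y -> x != y -> qx != qy /\ qx != qy + m /\ qy != qx + m.
Proof.
move=> h0 h1 h2 h3 h4 h5 H6 H7 H8 h9.
case: (ltngtP x y) => c.
- have H8' : ~~ adjb m y x by rewrite /adjb orbC.
  have {H8'} := nadj c H8'. lia.
- have {H8} := nadj c H8. lia.
- lia.
Qed.
Lemma step3 m qx qy : 2 <= m -> qx <= 2*m -> qy <= 2*m -> qx != qy /\ qx != qy + m /\ qy != qx + m ->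
  cq m qx != cq m qy.
Proof.
move=> h0 h1 h2 h3.
rewrite /cq; case: ifP => a1; [|case: ifP => a2]; case: ifP => b1; try (case: ifP => b2); lia.
Qed.

Lemma G_sym m : symmetric (@G m).
Proof. by move=> x y; rewrite /G /adjb orbC. Qed.

Lemma G_irr m : irreflexive (@G m).
Proof. move=> x; rewrite /G /adjb; lia. Qed.

Ltac conv H := first
  [ rewrite adj_sh_lt in H; [|lia|lia]
  | rewrite adj_sh_gt in H; [|lia|lia] ].

Lemma K4_off m (a : 'I_(6*m+1)) p q r : 2 <= m ->
  0 < p -> 0 < q -> 0 < r -> p != q -> q != r -> p != r ->
  p < 6*m+1 -> q < 6*m+1 -> r < 6*m+1 ->
  G (sh a 0) (sh a p) -> G (sh a 0) (sh a q) -> G (sh a 0) (sh a r) ->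
  G (sh a p) (sh a q) -> G (sh a p) (sh a r) -> G (sh a q) (sh a r) -> False.
Proof.
move=> hm h1 h2 h3 h4 h5 h6 h7 h8 h9 H1 H2 H3 H4 H5 H6.
conv H1; conv H2; conv H3.
case: (ltngtP p q) => c1; case: (ltngtP q r) => c2; case: (ltngtP p r) => c3; try lia;
conv H4; conv H5; conv H6; rewrite /okb in H1 H2 H3 H4 H5 H6; lia.
Qed.

Lemma pick1 (T : finType) (S : {set T}) n : #|S| = n.+1 -> exists x, x \in S /\ #|S :\ x| = n.
Proof.
move=> H. have /card_gt0P [x Hx] : 0 < #|S| by rewrite H.
exists x; split => //. move: H; rewrite (cardsD1 x S) Hx add1n. by case.
Qed.

Lemma K4free m (S : {set 'I_(6*m+1)}) : 2 <= m -> #|S| = 4 -> ~ is_clique (@G m) S.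
Proof.
move=> hm hS HC.
have [a [Ha hS1]] := pick1 hS.
have [b [Hb hS2]] := pick1 hS1.
have [c [Hc hS3]] := pick1 hS2.
have [d [Hd _]] := pick1 hS3.
rewrite !inE in Hb Hc Hd.
case/andP: Hb => ab Hb. case/and3P: Hc => cb ca Hc. case/and4P: Hd => dc db da Hd.
have hab : a != b by rewrite eq_sym.
have hac : a != c by rewrite eq_sym.
have had : a != d by rewrite eq_sym.
have Gab := HC a b Ha Hb hab. have Gac := HC a c Ha Hc hac. have Gad := HC a d Ha Hd had.
have Gbc : G b c by apply: HC => //; rewrite eq_sym.
have Gbd : G b d by apply: HC => //; rewrite eq_sym.
have Gcd : G c d by apply: HC => //; rewrite eq_sym.
have nz : forall x, x != a -> 0 < off a x.
  move=> x hx; rewrite lt0n; apply/negP => /eqP E; move: (sh_off a x); rewrite E sh0 => E'.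
  by rewrite E' eqxx in hx.
have di : forall x y, x != y -> off a x != off a y.
  move=> x y hxy; apply/negP => /eqP E; move: (sh_off a x) (sh_off a y); rewrite E => -> E'.
  by rewrite E' eqxx in hxy.
move: Gab Gac Gad Gbc Gbd Gcd.
rewrite -{1 2 3}(sh0 a) -(sh_off a b) -(sh_off a c) -(sh_off a d).
move=> G1 G2 G3 G4 G5 G6.
apply: (K4_off hm _ _ _ _ _ _ _ _ _ G1 G2 G3 G4 G5 G6);
  by [ apply: nz | apply: di; rewrite // eq_sym | apply: off_lt ].
Qed.

Lemma alpha_bound m (S : {set 'I_(6*m+1)}) : 2 <= m -> #|S| = m + 2 -> ~ is_indep (@G m) S.
Proof.
move=> hm hS HI.
have /card_gt0P [x0 Hx0] : 0 < #|S| by rewrite hS addn2.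
case: (@arg_minnP _ x0 (fun x => x \in S) (fun x => nat_of_ord x) Hx0) => lo Hlo Hmin.
have Plo : (lo \in S) && (nat_of_ord lo <= lo + 2*m) by rewrite Hlo leq_addr.
case: (@arg_maxnP _ lo (fun x => (x \in S) && (nat_of_ord x <= lo + 2*m)) (fun x => nat_of_ord x) Plo)
  => R /andP [HR HR2] Hmax.
have loR : lo <= R := Hmin R HR.
pose c (x : 'I_(6*m+1)) : 'I_m.+1 := inord (cq m (qf m lo R x)).
have facts : forall x, x \in S -> qf m lo R x <= 2*m /\
   ((x <= R /\ qf m lo R x = R - x) \/ (R < x /\ qf m lo R x + x = R + (6*m+1))).
  move=> x Hx. apply: (step1 hm (Hmin x Hx) (ltn_ord x) loR HR2 (ltn_ord R)).
  - case: (eqVneq x lo) => [->|hne]; [by left|right; exact: HI].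
  - by move=> h; apply: (Hmax x); rewrite Hx h.
  - case: (eqVneq x R) => [->|hne]; [by left|right; exact: HI].
have cinj : {in S &, injective c}.
  move=> x y Hx Hy /(congr1 (@nat_of_ord _)); rewrite /c !inordK ?cq_le // => E.
  apply/eqP; apply: contraT => hxy.
  have [qx1 qx2] := facts x Hx. have [qy1 qy2] := facts y Hy.
  have := step3 hm qx1 qy1 (step2 hm (ltn_ord x) (ltn_ord y) (ltn_ord R) qx1 qy1 qx2 qy2 (HI x y Hx Hy hxy) hxy).
  by rewrite E eqxx.
have := max_card (mem (c @: S)).
rewrite card_in_imset // card_ord hS. lia.
Qed.

Lemma reduce m (u v : 'I_(6*m+1)) : u != v -> exists b d, 0 < d <= 3*m /\
   ((u = b /\ v = sh b d) \/ (v = b /\ u = sh b d)).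
Proof.
move=> huv.
have dpos : 0 < off u v.
  rewrite lt0n; apply/negP => /eqP E; move: (sh_off u v); rewrite E sh0 => E'.
  by rewrite E' eqxx in huv.
have dlt := off_lt u v.
case: (leqP (off u v) (3*m)) => h.
  exists u, (off u v); split; first lia. by left; rewrite sh_off.
exists v, (6*m+1 - off u v); split; first lia. right; split => //.
apply: ord_inj. have hk : 6*m+1 - off u v < 6*m+1 by lia.
have := sh_val v hk; have := off_spec u v; have := ltn_ord u; have := ltn_ord v. lia.
Qed.

Ltac adjtac := first
  [ rewrite adj_sh_lt; [|lia|lia]
  | rewrite adj_sh_gt; [|lia|lia] ].

Lemma add_gen m (b : 'I_(6*m+1)) d k1 k2 : 0 < d -> d < k1 -> k1 < k2 -> k2 < 6*m+1 ->
  okb m k1 -> okb m k2 -> okb m (k1 - d) -> okb m (k2 - d) -> okb m (k2 - k1) ->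
  exists S : {set 'I_(6*m+1)}, #|S| = 4 /\ forall x y, x \in S -> y \in S -> x != y ->
    G x y || ((x == b) && (y == sh b d)) || ((x == sh b d) && (y == b)).
Proof.
move=> h0 h1 h2 h3 o1 o2 o3 o4 o5.
exists (sh b 0 |: (sh b d |: (sh b k1 |: [set sh b k2]))); split.
  have e1 : (sh b 0 == sh b d) = false by apply: sh_neq; lia.
  have e2 : (sh b 0 == sh b k1) = false by apply: sh_neq; lia.
  have e3 : (sh b 0 == sh b k2) = false by apply: sh_neq; lia.
  have e4 : (sh b d == sh b k1) = false by apply: sh_neq; lia.
  have e5 : (sh b d == sh b k2) = false by apply: sh_neq; lia.
  have e6 : (sh b k1 == sh b k2) = false by apply: sh_neq; lia.
  by rewrite !cardsU1 cards1 !inE e1 e2 e3 e4 e5 e6.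
move=> x y; rewrite !inE => /or4P [] /eqP -> /or4P [] /eqP -> hxy;
  first [ by rewrite eqxx in hxy
        | by rewrite sh0 !eqxx ?orbT
        | (apply/orP; left; apply/orP; left; adjtac; rewrite ?subn0 //) ].
Qed.

Lemma add_core m (b : 'I_(6*m+1)) d : 2 <= m -> 0 < d <= 3*m -> ~~ okb m d ->
  exists S : {set 'I_(6*m+1)}, #|S| = 4 /\ forall x y, x \in S -> y \in S -> x != y ->
    G x y || ((x == b) && (y == sh b d)) || ((x == sh b d) && (y == b)).
Proof.
move=> hm hd; rewrite /okb => hn.
case: (ltnP d m) => h.
  apply: (@add_gen m b d (3*m) (4*m)); rewrite /okb; lia.
apply: (@add_gen m b d (d+m) (5*m+1)); rewrite /okb; lia.
Qed.

Lemma del_gen m (b : 'I_(6*m+1)) d (F : nat -> nat) : 0 < d < 6*m+1 ->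
  (forall i, i < m -> [/\ 0 < F i < 6*m+1, F i != d, (F i < d -> ~~ okb m (d - F i)),
                          (d < F i -> ~~ okb m (F i - d)) & ~~ okb m (F i)]) ->
  (forall i j, i < m -> j < m -> F i < F j -> ~~ okb m (F j - F i)) ->
  (forall i j, i < m -> j < m -> F i = F j -> i = j) ->
  exists S : {set 'I_(6*m+1)}, #|S| = m + 2 /\ forall x y, x \in S -> y \in S -> x != y ->
    ~~ G x y || ((x == b) && (y == sh b d)) || ((x == sh b d) && (y == b)).
Proof.
move=> hd HF HP HI.
pose J := [set sh b (F i) | i : 'I_m].
have Jinj : injective (fun i : 'I_m => sh b (F i)).
  move=> i j E. have [/andP [hi1 hi2] _ _ _ _] := HF i (ltn_ord i). have [/andP [hj1 hj2] _ _ _ _] := HF j (ltn_ord j).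
  apply: ord_inj; apply: (HI i j (ltn_ord i) (ltn_ord j)); exact: (sh_inj hi2 hj2 E).
have cJ : #|J| = m by rewrite card_imset // card_ord.
have inJ : forall x, x \in J -> exists2 i, i < m & x = sh b (F i).
  move=> x /imsetP [i _ ->]; by exists i.
have n0 : sh b 0 \notin sh b d |: J.
  rewrite !inE sh_neq; [|lia|lia|lia]. apply/imsetP => [[i _ E]].
  have [/andP [hi1 hi2] _ _ _ _] := HF i (ltn_ord i). have := sh_inj _ hi2 E. lia.
have nd : sh b d \notin J.
  apply/imsetP => [[i _ E]].
  have [/andP [hi1 hi2] hne _ _ _] := HF i (ltn_ord i). have := sh_inj _ hi2 E. lia.
exists (sh b 0 |: (sh b d |: J)); split.
  rewrite cardsU1 n0 cardsU1 nd cJ. lia.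
have key : forall i j, i < 6*m+1 -> j < 6*m+1 -> i != j -> ~~ okb m (if i < j then j - i else i - j) ->
   ~~ G (sh b i) (sh b j).
  move=> i j hi hj hij; case: (ltngtP i j) => c.
  - by rewrite adj_sh_lt.
  - by rewrite adj_sh_gt.
  - by rewrite c eqxx in hij.
move=> x y; rewrite !inE => /or3P [/eqP -> | /eqP -> | /inJ [i hi ->]] /or3P [/eqP -> | /eqP -> | /inJ [j hj ->]] hxy.
- by rewrite eqxx in hxy.
- by rewrite sh0 !eqxx ?orbT.
- have [/andP [a1 a2] a3 a4 a5 a6] := HF j hj.
  apply/orP; left; apply/orP; left; apply: key; rewrite ?a1 ?subn0 //; try lia.
- by rewrite sh0 !eqxx ?orbT.
- by rewrite eqxx in hxy.
- have [/andP [a1 a2] a3 a4 a5 a6] := HF j hj.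
  apply/orP; left; apply/orP; left; apply: key => //; [lia | by rewrite eq_sym|].
  case: (ltngtP d (F j)) => c; [exact: a5 | exact: a4 | by rewrite c eqxx in a3].
- have [/andP [a1 a2] a3 a4 a5 a6] := HF i hi.
  apply/orP; left; apply/orP; left; apply: key => //; [lia|lia|].
  have -> : (F i < 0) = false by lia. by rewrite subn0.
- have [/andP [a1 a2] a3 a4 a5 a6] := HF i hi.
  apply/orP; left; apply/orP; left; apply: key => //; [lia|].
  case: (ltngtP (F i) d) => c; [exact: a4 | exact: a5 | by rewrite c eqxx in a3].
- have [/andP [a1 a2] a3 a4 a5 a6] := HF i hi. have [/andP [b1 b2] b3 b4 b5 b6] := HF j hj.
  apply/orP; left; apply/orP; left; apply: key => //.
    by apply: contraNneq hxy => ->.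
  case: (ltngtP (F i) (F j)) => c; [exact: HP | exact: HP | by rewrite c eqxx in hxy].
Qed.

Definition Fd m d i :=
  if d == m then (if i < m - 1 then m + 1 + i else 6*m)
  else if d == 3*m then 4*m + 1 + i
  else if i < m - 1 then (if d - 2*m + i < m then d - 2*m + i else d - 2*m + i + 1) else 2*m.

Lemma Fd_spec m d i : (d = m /\ i < m - 1 /\ Fd m d i = m + 1 + i) \/ (d = m /\ m - 1 <= i /\ Fd m d i = 6*m)
  \/ (d <> m /\ d = 3*m /\ Fd m d i = 4*m+1+i)
  \/ (d <> m /\ d <> 3*m /\ i < m - 1 /\ d - 2*m + i < m /\ Fd m d i = d - 2*m + i)
  \/ (d <> m /\ d <> 3*m /\ i < m - 1 /\ m <= d - 2*m + i /\ Fd m d i = d - 2*m + i + 1)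
  \/ (d <> m /\ d <> 3*m /\ m - 1 <= i /\ Fd m d i = 2*m).
Proof.
rewrite /Fd. case: eqP => h1; [case: ifP => h2 | case: eqP => h3; [|case: ifP => h4; [case: ifP => h5|]]]; lia.
Qed.

Lemma del_core m (b : 'I_(6*m+1)) d : 2 <= m -> 0 < d <= 3*m -> okb m d ->
  exists S : {set 'I_(6*m+1)}, #|S| = m + 2 /\ forall x y, x \in S -> y \in S -> x != y ->
    ~~ G x y || ((x == b) && (y == sh b d)) || ((x == sh b d) && (y == b)).
Proof.
move=> hm hd ho. apply: (@del_gen m b d (Fd m d)).
- lia.
- move=> i hi. have := Fd_spec m d i. move: ho; rewrite /okb => ho H.
  split; lia.
- move=> i j hi hj. have := Fd_spec m d i; have := Fd_spec m d j. move: ho; rewrite /okb => ho H1 H2 H3. lia.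
- move=> i j hi hj. have := Fd_spec m d i; have := Fd_spec m d j. move: ho; rewrite /okb => ho H1 H2 H3. lia.
Qed.

Lemma main m t : 2 <= m -> t = m + 2 ->
  exists e : rel 'I_(6 * m + 1), simple_graph e /\ doubly_saturated 4 t e.
Proof.
move=> hm ht. exists (@G m). split; first by split; [exact: G_irr | exact: G_sym].
have o0 : 0 < 6*m+1 by rewrite addn1.
pose z : 'I_(6*m+1) := Ordinal o0.
split.
- split; first by move=> S hS; apply: K4free.
  by move=> S hS; apply: alpha_bound => //; rewrite -ht.
- move=> u v huv hn [HK _].
  have [b [d [hd H]]] := reduce huv.
  have hG : G u v = okb m d.
    case: H => [[-> ->]|[-> ->]]; [rewrite -{1}(sh0 b) adj_sh_lt ?subn0 //; lia
                                 | rewrite -{2}(sh0 b) adj_sh_gt ?subn0 //; lia].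
  have hn' : ~~ okb m d by rewrite -hG.
  have [S [hS HS]] := add_core b hm hd hn'.
  apply: (HK S hS) => x y hx hy hxy; rewrite /add_edge.
  have := HS x y hx hy hxy.
  case: H => [[-> ->]|[-> ->]] //. by move=> /orP [/orP [->|->]|->]; rewrite ?orbT.
- move=> u v huv [_ HI].
  have huv' : u != v by apply: contraTneq huv => ->; rewrite G_irr.
  have [b [d [hd H]]] := reduce huv'.
  have hG : G u v = okb m d.
    case: H => [[-> ->]|[-> ->]]; [rewrite -{1}(sh0 b) adj_sh_lt ?subn0 //; lia
                                 | rewrite -{2}(sh0 b) adj_sh_gt ?subn0 //; lia].
  have ho : okb m d by rewrite -hG.
  have [S [hS HS]] := del_core b hm hd ho.
  apply: (HI S); first by rewrite hS ht.
  move=> x y hx hy hxy; rewrite /del_edge.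
  have := HS x y hx hy hxy.
  case: H => [[-> ->]|[-> ->]].
    by case: (G x y) => //=; rewrite negbK.
  by case: (G x y) => //=; rewrite negbK orbC.
- exists z, (sh z 1); split.
    by rewrite -{1}(sh0 z) sh_neq //; lia.
  by rewrite -{1}(sh0 z) adj_sh_lt ?subn0 /okb //; lia.
- exists z, (sh z m).
  by rewrite -{1}(sh0 z) adj_sh_lt ?subn0 /okb ?eqxx //; lia.
Qed.

Theorem theorem1 (t : nat) : 4 <= t ->
  exists e : rel 'I_(6 * t - 11),
    simple_graph e /\ doubly_saturated 4 t e.
Proof.
move=> ht. have E : 6 * t - 11 = 6 * (t-2) + 1 by lia.
rewrite E. apply: main; lia.
Qed.
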